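(* Let $\Omega=\{(x-a_1)^{r_1},\dots,(x-a_n)^{r_n}\}$ and $\Psi=\{(x-b_1)^{s_1},\dots,(x-b_m)^{s_m}\}$ be P-independent subsets of $\mathbb{F}[x;\sigma,\delta]$ of sizes $n,m\in\mathbb{Z}_+$ respectively, where $a_i,b_j\in\mathbb{F}$ and $r_i,s_j\in\mathbb{Z}_+$. If no element of $\{a_1,\dots,a_n\}$ is $(\sigma,\delta)$-conjugate to an element of $\{b_1,\dots,b_m\}$, then $\Omega\cup\Psi$ has size $n+m$ and is P-independent.
   Context: Let $\mathbb{F}$ be a division ring, $\sigma$ a ring endomorphism of $\mathbb{F}$ and $\delta$ a $\sigma$-derivation; $\mathbb{F}[x;\sigma,\delta]$ is the skew polynomial ring with $xa=\sigma(a)x+\delta(a)$. Elements $a,b\in\mathbb{F}$ are $(\sigma,\delta)$-conjugate if $b=a^\beta:=\sigma(\beta)a\beta^{-1}+\delta(\beta)\beta^{-1}$ for some $\beta\in\mathbb{F}^*$. For a set $\Omega$ of skew polynomials, $I(\Omega)$ is the left ideal of skew polynomials right-divisible by every element of $\Omega$ and $F_\Omega$ its monic generator of minimal degree (or $0$). $\Omega$ is P-independent if it is finite, $I(\Omega)\ne\{0\}$ and $\deg F_\Omega=\sum_{P\in\Omega}\deg P$. *)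

(* Defs.v *)
From HB Require Import structures.
From mathcomp Require Import all_boot all_order all_algebra.
Set Implicit Arguments. Unset Strict Implicit. Unset Printing Implicit Defensive.
Import GRing.Theory.
Local Open Scope ring_scope.

Definition division_ring (F : unitRingType) : Prop :=
  forall a : F, a != 0 -> a \is a GRing.unit.

(* delta is a sigma-derivation: additive and delta(ab) = sigma(a) delta(b) + delta(a) b
   (forced by x a = sigma(a) x + delta(a)). *)
Definition sigma_derivation (F : unitRingType) (sigma delta : F -> F) : Prop :=
  (forall a b, delta (a + b) = delta a + delta b) /\
  (forall a b, delta (a * b) = sigma a * delta b + delta a * b).

Section Skew.
Variables (F : unitRingType) (sigma delta : F -> F).

(* Elements of F[x;sigma,delta] are represented by their coefficient lists
   ({poly F}, with p = \sum_i p`_i x^i, coefficients on the left).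
   Addition is that of {poly F}; multiplication is the skew one below. *)

(* left multiplication by x: x * (c x^k) = sigma(c) x^(k+1) + delta(c) x^k *)
Definition skX (p : {poly F}) : {poly F} :=
  map_poly sigma p * 'X + map_poly delta p.

(* skew product: (\sum_i p_i x^i) * q = \sum_i p_i (x^i q) *)
Definition skmul (p q : {poly F}) : {poly F} :=
  \sum_(i < size p) p`_i *: iter i skX q.

Definition skexp (p : {poly F}) (r : nat) : {poly F} :=
  iter r (fun q => skmul q p) 1.

Definition rdivides (g f : {poly F}) : Prop := exists h, f = skmul h g.

Definition inI (Om : seq {poly F}) (f : {poly F}) : Prop :=
  forall P, P \in Om -> rdivides P f.

Definition is_F_Omega (Om : seq {poly F}) (Fm : {poly F}) : Prop :=
  [/\ Fm \is monic, inI Om Fm &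
      forall f, inI Om f -> f != 0 -> (size Fm <= size f)%N].

Definition P_independent (Om : seq {poly F}) : Prop :=
  (exists f, inI Om f /\ f != 0) /\
  exists Fm, is_F_Omega Om Fm /\
    (size Fm).-1 = (\sum_(P <- undup Om) (size P).-1)%N.

Definition sd_conjugate (a b : F) : Prop :=
  exists beta : F, beta != 0 /\
    b = sigma beta * a * beta^-1 + delta beta * beta^-1.

End Skew.

(* Main.v *)
Require Import Defs.
From mathcomp Require Import all_boot all_order all_algebra.
From mathcomp Require Import zify.
Import GRing.Theory.
Local Open Scope ring_scope.

Lemma arith1 a b c : (0 < b)%N -> (a <= c)%N -> ((a + b).-1 <= (b + c).-1)%N.
Proof. lia. Qed.
Lemma arith2 a b c : (0 < b)%N -> (0 < c)%N -> (a <= c)%N -> ((b + c).-1 <= (a + b).-1)%N ->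
  ((a + b).-1).-1 = (b.-1 + c.-1)%N.
Proof. lia. Qed.

Section SkewTheory.
Variables (F : unitRingType) (sigma : {rmorphism F -> F}) (delta : F -> F).
Hypothesis divF : division_ring F.
Hypothesis sdF : sigma_derivation sigma delta.

Implicit Types (p q w x y z u v g h Z f H : {poly F}) (c d : F).
Local Notation skX := (skX sigma delta).
Local Notation "p ** q" := (skmul sigma delta p q) (at level 40, left associativity).

Lemma deltaD a b : delta (a + b) = delta a + delta b.
Proof. by case: sdF. Qed.
Lemma deltaM a b : delta (a * b) = sigma a * delta b + delta a * b.
Proof. by case: sdF. Qed.
Lemma delta0 : delta 0 = 0.
Proof. by apply/eqP; rewrite -(inj_eq (addrI (delta 0))) addr0 -deltaD addr0. Qed.
Lemma deltaN a : delta (- a) = - delta a.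
Proof. by apply/eqP; rewrite -subr_eq0 opprK -deltaD addNr delta0. Qed.
Lemma deltaB a b : delta (a - b) = delta a - delta b.
Proof. by rewrite deltaD deltaN. Qed.
Lemma delta1 : delta 1 = 0.
Proof.
have h := deltaM 1 1; rewrite !mulr1 rmorph1 mul1r in h.
apply: (addrI (delta 1)); by rewrite -h addr0.
Qed.

Lemma size_eqS (p : {poly F}) k : p`_k != 0 -> (forall j, (k < j)%N -> p`_j = 0) -> size p = k.+1.
Proof.
move=> nz hj; apply/eqP; rewrite eqn_leq; apply/andP; split.
  by apply/leq_sizeP => j; apply: hj.
by rewrite ltnNge; apply/negP => /(nth_default 0) h; rewrite h eqxx in nz.
Qed.

Lemma coef_mapd (p : {poly F}) i : (map_poly delta p)`_i = delta p`_i.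
Proof. exact: coef_map_id0 delta0. Qed.

Lemma coef_skX p i : (skX p)`_i = (if i == 0%N then 0 else sigma p`_i.-1) + delta p`_i.
Proof.
rewrite /Defs.skX coefD coefMX coef_mapd.
by case: i => [|i] /=; rewrite ?coef_map.
Qed.

Lemma skXD p q : skX (p + q) = skX p + skX q.
Proof.
apply/polyP => i; rewrite coefD !coef_skX !coefD deltaD.
by case: (i == 0%N); rewrite ?addr0 ?rmorphD; [rewrite ?add0r | rewrite addrACA].
Qed.
Lemma skX0 : skX 0 = 0.
Proof. by apply/polyP => i; rewrite coef_skX !coef0 delta0 rmorph0; case: (_ == _); rewrite addr0. Qed.
Lemma skXZ c p : skX (c *: p) = sigma c *: skX p + delta c *: p.
Proof.
apply/polyP => i; rewrite coef_skX [RHS]coefD !coefZ coef_skX deltaM mulrDr.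
by case: ifP => _; rewrite ?mulr0 ?add0r ?rmorphM ?addrA.
Qed.
Lemma skXN p : skX (- p) = - skX p.
Proof. by apply/eqP; rewrite -subr_eq0 opprK -skXD addNr skX0. Qed.

Lemma iter_skXD k p q : iter k skX (p + q) = iter k skX p + iter k skX q.
Proof. by elim: k => //= k ->; rewrite skXD. Qed.
Lemma iter_skX0 k : iter k skX 0 = 0.
Proof. by elim: k => //= k ->; rewrite skX0. Qed.

Lemma skmulE {N} {p} {q} : (forall i, (N <= i)%N -> p`_i = 0) ->
  p ** q = \sum_(i < N) p`_i *: iter i skX q.
Proof.
move=> hN; have hs : (size p <= N)%N by apply/leq_sizeP.
rewrite /skmul (big_ord_widen N (fun i => p`_i *: iter i skX q) hs) big_mkcond /=.
apply: eq_bigr => i _; case: ifP => // /negbT; rewrite -leqNgt => h.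
by rewrite nth_default // scale0r.
Qed.

Lemma skmulDl p1 p2 q : (p1 + p2) ** q = p1 ** q + p2 ** q.
Proof.
set N := maxn (size p1) (size p2).
have h1 i : (N <= i)%N -> p1`_i = 0 by move=> h; apply: nth_default; apply: leq_trans h; apply: leq_maxl.
have h2 i : (N <= i)%N -> p2`_i = 0 by move=> h; apply: nth_default; apply: leq_trans h; apply: leq_maxr.
rewrite (skmulE h1) (skmulE h2) (@skmulE N _ q); last by move=> i hi; rewrite coefD h1 ?h2 ?addr0.
by rewrite -big_split; apply: eq_bigr => i _; rewrite coefD scalerDl.
Qed.
Lemma skmul0l q : 0 ** q = 0.
Proof. by rewrite /skmul size_poly0 big_ord0. Qed.
Lemma skmulNl p q : (- p) ** q = - (p ** q).
Proof. by apply/eqP; rewrite -subr_eq0 opprK -skmulDl addNr skmul0l. Qed.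
Lemma skmulBl p1 p2 q : (p1 - p2) ** q = p1 ** q - p2 ** q.
Proof. by rewrite skmulDl skmulNl. Qed.
Lemma skmulZl c p q : (c *: p) ** q = c *: (p ** q).
Proof.
have h i : (size p <= i)%N -> p`_i = 0 by move=> hi; apply: nth_default.
rewrite (skmulE h) (@skmulE (size p) _ q); last by move=> i hi; rewrite coefZ h ?mulr0.
by rewrite scaler_sumr; apply: eq_bigr => i _; rewrite coefZ scalerA.
Qed.
Lemma skmulDr p q1 q2 : p ** (q1 + q2) = p ** q1 + p ** q2.
Proof. by rewrite /skmul -big_split; apply: eq_bigr => i _; rewrite iter_skXD scalerDr. Qed.
Lemma skmul0r p : p ** 0 = 0.
Proof. by rewrite /skmul big1 // => i _; rewrite iter_skX0 scaler0. Qed.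
Lemma skmulNr p q : p ** (- q) = - (p ** q).
Proof. by apply/eqP; rewrite -subr_eq0 opprK -skmulDr addNr skmul0r. Qed.
Lemma skmulBr p q1 q2 : p ** (q1 - q2) = p ** q1 - p ** q2.
Proof. by rewrite skmulDr skmulNr. Qed.

Lemma skmul_suml I (s : seq I) (P : pred I) (G : I -> {poly F}) q :
  (\sum_(i <- s | P i) G i) ** q = \sum_(i <- s | P i) (G i ** q).
Proof. exact: (big_morph (fun p => p ** q) (fun p1 p2 => skmulDl p1 p2 q) (skmul0l q)). Qed.

Lemma skmulXn k q : 'X^k ** q = iter k skX q.
Proof.
rewrite (@skmulE k.+1 _ q); last by move=> i hi; rewrite coefXn; case: eqP => // ?; subst; rewrite ltnn in hi.
rewrite big_ord_recr /= big1 ?add0r; first by rewrite coefXn eqxx scale1r.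
by move=> i _; rewrite coefXn (ltn_eqF (ltn_ord i)) scale0r.
Qed.
Lemma skmul1l q : 1 ** q = q.
Proof. by rewrite -(expr0 'X) skmulXn. Qed.
Lemma skmulCl c q : c%:P ** q = c *: q.
Proof. by rewrite -alg_polyC skmulZl skmul1l. Qed.

Lemma skX_sum I (s : seq I) (P : pred I) (G : I -> {poly F}) :
  skX (\sum_(i <- s | P i) G i) = \sum_(i <- s | P i) skX (G i).
Proof. exact: (big_morph skX skXD skX0). Qed.

Lemma skX_skmul p q : skX (p ** q) = skX p ** q.
Proof.
have e : skX p = map_poly sigma p * 'X + map_poly delta p by [].
rewrite {1}/skmul skX_sum e skmulDl.
have hd i : (size p <= i)%N -> (map_poly delta p)`_i = 0.
  by move=> hi; rewrite coef_mapd nth_default ?delta0.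
have hs i : ((size p).+1 <= i)%N -> (map_poly sigma p * 'X)`_i = 0.
  move=> hi; rewrite coefMX; case: i hi => //= i hi; by rewrite coef_map nth_default ?raddf0.
have -> := skmulE (q:=q) hd. have -> := skmulE (q:=q) hs.
rewrite big_ord_recl /= coefMX eqxx scale0r add0r -big_split /=.
apply: eq_bigr => i _; rewrite coefMX coef_mapd /= coef_map.
by rewrite skXZ.
Qed.

Lemma iter_skX_skmul k p q : iter k skX (p ** q) = iter k skX p ** q.
Proof. by elim: k => //= k ->; rewrite skX_skmul. Qed.

Lemma skmulA p q w : p ** q ** w = p ** (q ** w).
Proof.
have -> : p ** q = \sum_(i < size p) p`_i *: iter i skX q by [].
rewrite skmul_suml [in RHS]/skmul; apply: eq_bigr => i _.
by rewrite skmulZl iter_skX_skmul.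
Qed.

Lemma skXXn (k : nat) : skX ('X^k : {poly F}) = 'X^(k.+1).
Proof.
rewrite /Defs.skX map_polyXn exprSr; rewrite [map_poly delta _](_ : _ = 0) ?addr0 //.
apply/polyP => i; rewrite coef_mapd coefXn coef0.
by case: (_ == _); rewrite ?delta1 ?delta0.
Qed.

Lemma skmul1r p : p ** 1 = p.
Proof.
rewrite /skmul -[in RHS](coefK p) poly_def; apply: eq_bigr => i _.
by congr (_ *: _); elim: (nat_of_ord i) => // k /= ->; rewrite skXXn.
Qed.


Lemma unitE c : (c \is a GRing.unit) = (c != 0).
Proof.
apply/idP/idP; last exact: divF.
by apply: contraTneq => ->; rewrite unitr0.
Qed.

Lemma mul_neq0 {c d} : c != 0 -> d != 0 -> c * d != 0.
Proof. by rewrite -!unitE => hc hd; rewrite unitrMl. Qed.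

Lemma sigma_neq0 c : c != 0 -> sigma c != 0.
Proof. by rewrite -!unitE; apply: rmorph_unit. Qed.

Lemma iter_sigma_neq0 k c : c != 0 -> iter k sigma c != 0.
Proof. by move=> h; elim: k => //= k; apply: sigma_neq0. Qed.

Lemma skX_size {p} : p != 0 ->
  size (skX p) = (size p).+1 /\ lead_coef (skX p) = sigma (lead_coef p).
Proof.
move=> pn0; have sp := polySpred pn0; set k := (size p).-1 in sp.
have top : (skX p)`_k.+1 = sigma (lead_coef p).
  by rewrite coef_skX /= [p`_k.+1]nth_default ?sp // delta0 addr0 lead_coefE.
have hs : size (skX p) = k.+2.
  apply: size_eqS; first by rewrite top sigma_neq0 // lead_coef_eq0.
  move=> j hj; rewrite coef_skX; case: j hj => // j hj /=.
  by rewrite !nth_default ?raddf0 ?delta0 ?addr0 // sp // ltnW.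
by rewrite hs sp; split => //; rewrite lead_coefE hs.
Qed.

Lemma iter_skX_size k {p} : p != 0 ->
  size (iter k skX p) = (size p + k)%N /\ lead_coef (iter k skX p) = iter k sigma (lead_coef p).
Proof.
move=> pn0; elim: k => [|k [ih1 ih2]]; first by rewrite addn0.
have nz : iter k skX p != 0 by rewrite -size_poly_gt0 ih1 addn_gt0 size_poly_gt0 pn0.
by have [h1 h2] := skX_size nz; rewrite /= h1 h2 ih1 ih2 addnS.
Qed.

Lemma skmul_size_lead {p q} : p != 0 -> q != 0 ->
  size (p ** q) = (size p + size q).-1 /\
  lead_coef (p ** q) = lead_coef p * iter (size p).-1 sigma (lead_coef q).
Proof.
move=> pn0 qn0; have sp := polySpred pn0; have sq := polySpred qn0.
set k := (size p).-1 in sp *; set l := (size q).-1 in sq.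
have [hi1 hi2] := iter_skX_size k qn0.
have E : p ** q = \sum_(i < k) p`_i *: iter i skX q + p`_k *: iter k skX q.
  by rewrite /skmul sp big_ord_recr.
have small j : (l + k <= j)%N -> (\sum_(i < k) p`_i *: iter i skX q)`_j = 0.
  move=> hj; rewrite coef_sum big1 // => i _; rewrite coefZ.
  have [s1 _] := iter_skX_size i qn0.
  rewrite (@nth_default _ 0 (iter i skX q) j) ?mulr0 // s1 sq addSn; apply: leq_trans hj.
  by rewrite -addnS leq_add2l.
have top : (p ** q)`_(l + k) = lead_coef p * iter k sigma (lead_coef q).
  rewrite E coefD small // add0r coefZ lead_coefE -/k.
  by rewrite -hi2 [lead_coef (iter _ _ _)]lead_coefE hi1 sq addSn.
have hs : size (p ** q) = (l + k).+1.
  apply: size_eqS; first by rewrite top; apply: mul_neq0; [|apply: iter_sigma_neq0]; rewrite lead_coef_eq0.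
  move=> j hj; rewrite E coefD (small _ (ltnW hj)) add0r coefZ (@nth_default _ 0 (iter k skX q) j) ?mulr0 //.
  by rewrite hi1 sq addSn.
split; first by rewrite hs sp sq addSn addnS /= addnC.
by rewrite lead_coefE hs /= top.
Qed.

Lemma skmul_neq0 {p q} : p != 0 -> q != 0 -> p ** q != 0.
Proof.
move=> pn0 qn0; have [h _] := skmul_size_lead pn0 qn0.
rewrite -size_poly_gt0 h (polySpred pn0) addSn /=.
by rewrite ltn_addl // size_poly_gt0.
Qed.

Lemma skmul_size {p q} : p != 0 -> q != 0 -> size (p ** q) = (size p + size q).-1.
Proof. by move=> pn0 qn0; have [] := skmul_size_lead pn0 qn0. Qed.

Lemma skmul_eq0 p q : q != 0 -> (p ** q == 0) = (p == 0).
Proof.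
move=> qn0; case: (eqVneq p 0) => [->|pn0]; first by rewrite skmul0l eqxx.
by rewrite (negbTE (skmul_neq0 pn0 qn0)).
Qed.

Lemma skmulIr q p1 p2 : q != 0 -> p1 ** q = p2 ** q -> p1 = p2.
Proof.
move=> qn0 /eqP; rewrite -subr_eq0 -skmulBl skmul_eq0 // subr_eq0.
by move/eqP.
Qed.

Lemma skmul_monic_lead p q : q \is monic -> lead_coef (p ** q) = lead_coef p.
Proof.
move=> /monicP mq; case: (eqVneq p 0) => [->|pn0]; first by rewrite skmul0l.
have qn0 : q != 0 by rewrite -lead_coef_eq0 mq oner_neq0.
have [_ ->] := skmul_size_lead pn0 qn0; rewrite mq.
have h1 : forall k, iter k sigma 1 = 1 by elim=> //= k ->; rewrite rmorph1.
by rewrite h1 mulr1.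
Qed.

Lemma skmul_sizeD {p q} : p != 0 -> q != 0 -> (size (p ** q)).+1 = (size p + size q)%N.
Proof.
move=> pn0 qn0; rewrite (skmul_size pn0 qn0).
have hp : (0 < size p)%N by rewrite size_poly_gt0.
have hq : (0 < size q)%N by rewrite size_poly_gt0.
lia.
Qed.

Lemma scale_size c p : c != 0 -> size (c *: p) = size p /\ lead_coef (c *: p) = c * lead_coef p.
Proof.
move=> cn0; case: (eqVneq p 0) => [->|pn0]; first by rewrite scaler0 lead_coef0 mulr0.
have sp := polySpred pn0.
have hs : size (c *: p) = size p.
  rewrite sp; apply: size_eqS.
    by rewrite coefZ; apply: mul_neq0 => //; rewrite -lead_coefE lead_coef_eq0.
  by move=> j hj; rewrite coefZ nth_default ?mulr0 // sp.
by split => //; rewrite !lead_coefE hs coefZ.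
Qed.

Lemma skdiv g p : g != 0 -> exists q r, p = q ** g + r /\ (size r < size g)%N.
Proof.
move=> gn0; move: {2}(size p) (leqnn (size p)) => N; elim: N p => [|N IH] p hp.
  by exists 0, p; rewrite skmul0l add0r; move: hp; rewrite leqn0 => /eqP ->; rewrite size_poly_gt0.
case: (ltnP (size p) (size g)) => hpg; first by exists 0, p; rewrite skmul0l add0r.
have pn0 : p != 0 by rewrite -size_poly_gt0; apply: leq_trans hpg; rewrite size_poly_gt0.
set k := (size p - size g)%N.
have hk : (size g + k)%N = size p by rewrite /k subnKC.
have [s1 l1] := iter_skX_size k gn0.
set T := iter k skX g.
have lTn0 : iter k sigma (lead_coef g) != 0 by apply: iter_sigma_neq0; rewrite lead_coef_eq0.
set c := lead_coef p * (iter k sigma (lead_coef g))^-1.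
have hT : (c *: T)`_(size p).-1 = lead_coef p.
  rewrite coefZ -hk -s1 -lead_coefE l1 /c divrK //; by rewrite unitE.
have hT2 j : (size p <= j)%N -> (c *: T)`_j = 0.
  by move=> hj; rewrite coefZ nth_default ?mulr0 // s1 hk.
have h1 : (size (p - c *: T)%R <= (size p).-1)%N.
  apply/leq_sizeP => j hj.
  rewrite coefB; case: (ltngtP j (size p).-1) => hj'.
  - by move: hj; rewrite leqNgt hj'.
  - rewrite hT2 ?nth_default ?subr0 //; first by rewrite (polySpred pn0).
    by rewrite (polySpred pn0).
  - by rewrite hj' hT -lead_coefE subrr.
have hsz : (size (p - c *: T)%R <= N)%N.
  have hp0 : (0 < size p)%N by rewrite size_poly_gt0.
  lia.
have [q [r [e hr]]] := IH _ hsz.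
exists (q + c *: 'X^k), r; split => //.
rewrite skmulDl -addrA [_ ** g + r]addrC addrA -e skmulZl skmulXn -/T.
by rewrite subrK.
Qed.

Lemma skCM {x y} : x != 0 -> y != 0 ->
  exists m1 m2, [/\ m1 != 0, m1 ** x = m2 ** y & (size m1 <= size y)%N].
Proof.
move: {2}(size y) (leqnn (size y)) => N; elim: N x y => [|N IH] x y hy xn0 yn0.
  by move: hy; rewrite leqn0 size_poly_eq0 (negbTE yn0).
have [q [r [e hr]]] := skdiv y x yn0.
case: (eqVneq r 0) => [r0|rn0].
  exists 1, q; split; rewrite ?oner_neq0 ?skmul1l ?e ?r0 ?addr0 //.
  by rewrite size_poly1 size_poly_gt0.
have hr' : (size r <= N)%N by rewrite -ltnS; apply: leq_trans hr hy.
have [m1 [m2 [m1n0 em hm]]] := IH y r hr' yn0 rn0.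
have m2n0 : m2 != 0.
  apply/negP => /eqP m20; move: em; rewrite m20 skmul0l => /eqP.
  by rewrite skmul_eq0 // (negbTE m1n0).
exists m2, (m2 ** q + m1); split => //.
  by rewrite e skmulDr skmulDl skmulA em.
have h1 := skmul_sizeD m1n0 yn0; have h2 := skmul_sizeD m2n0 rn0.
rewrite em in h1; lia.
Qed.

Definition lin (cs : seq F) : {poly F} := foldr (fun c acc => acc ** ('X - c%:P)) 1 cs.
Definition cj c b := sigma b * c * b^-1 + delta b * b^-1.

Lemma lin_cat cs ds : lin (cs ++ ds) = lin ds ** lin cs.
Proof. by elim: cs => [|c cs ih] /=; rewrite ?skmul1r // ih skmulA. Qed.

Lemma lin_monic cs : lin cs \is monic /\ size (lin cs) = (size cs).+1.
Proof.
elim: cs => [|c cs [m1 s1]] /=; first by rewrite monic1 size_poly1.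
have l0 : lin cs != 0 by rewrite -size_poly_gt0 s1.
have x0 : 'X - c%:P != 0 by rewrite -size_poly_gt0 size_XsubC.
split; first by apply/monicP; rewrite skmul_monic_lead ?monicXsubC //; apply/monicP.
by rewrite skmul_size // s1 size_XsubC addn2.
Qed.

Lemma lin_neq0 cs : lin cs != 0.
Proof. by have [_ h] := lin_monic cs; rewrite -size_poly_gt0 h. Qed.

Lemma XsubC_neq0 c : 'X - c%:P != 0.
Proof. by rewrite -size_poly_gt0 size_XsubC. Qed.

Lemma lin2_coef e q j : (('X - e%:P) ** q)`_j =
  (if j == 0%N then 0 else sigma q`_j.-1) + delta q`_j - e * q`_j.
Proof.
by rewrite skmulBl -[X in X ** q]expr1 skmulXn skmulCl coefB coef_skX coefZ.
Qed.

Lemma cj_swap1 c d : c != d -> sigma d + cj c (c - d) = sigma c + cj d (c - d).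
Proof.
move=> cd; have bu : (c - d) \is a GRing.unit by rewrite unitE subr_eq0.
rewrite /cj.
set A := sigma (c - d) * c * (c - d)^-1; set B := sigma (c - d) * d * (c - d)^-1.
set D := delta (c - d) * (c - d)^-1.
have e1 : A = sigma c - sigma d + B.
  have e0 : A - B = sigma (c - d) by rewrite /A /B -mulrBl -mulrBr mulrK.
  by rewrite -rmorphB -e0 subrK.
by rewrite e1 -!addrA addrCA addNKr.
Qed.

Lemma cj_swap2 c d : c != d -> cj c (c - d) * d - delta d = cj d (c - d) * c - delta c.
Proof.
move=> cd; have bu : (c - d) \is a GRing.unit by rewrite unitE subr_eq0.
have hd : d = c - (c - d) by rewrite opprB addrC subrK.
move: bu hd; rewrite /cj; move: (c - d) => b bu hd; rewrite !mulrDl.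
have e1 : sigma b * c * b^-1 * d = sigma b * d * b^-1 * c.
  rewrite -!mulrA; congr (_ * _); rewrite !mulrA hd !mulrBr !mulrBl.
  by rewrite divrK // divrr // mul1r.
have e2 : delta b * b^-1 * d - delta d = delta b * b^-1 * c - delta c.
  have -> : delta d = delta c - delta b by rewrite hd deltaB.
  by rewrite hd mulrBr divrK // opprB addrA subrK.
by rewrite e1 -!addrA e2.
Qed.

Lemma skswap {c d} : c != d ->
  ('X - (cj c (c - d))%:P) ** ('X - d%:P) = ('X - (cj d (c - d))%:P) ** ('X - c%:P).
Proof.
move=> cd; apply/polyP => j; rewrite !lin2_coef !coefB !coefX !coefC.
case: j => [|[|[|j]]] /=; rewrite ?subrr ?mulr0 //.
  by rewrite !sub0r !add0r !deltaN !mulrN !opprK addrC cj_swap2 // addrC.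
by rewrite subr0 !mulr1 !sub0r !rmorphN delta1 !addr0 -!opprD cj_swap1.
Qed.

Lemma swap_div {c d y z} : c != d -> y ** ('X - d%:P) = z ** ('X - c%:P) ->
  exists al, y = al ** ('X - (cj c (c - d))%:P) /\ z = al ** ('X - (cj d (c - d))%:P).
Proof.
move=> cd e.
have [al [r [ey hr]]] := skdiv _ y (XsubC_neq0 (cj c (c - d))).

have r0 : r = (r`_0)%:P by apply: size1_polyC; move: hr; rewrite size_XsubC.
set rho := r`_0 in r0.
set w := z - al ** ('X - (cj d (c - d))%:P).
have e2 : rho *: ('X - d%:P) = w ** ('X - c%:P).
  rewrite /w skmulBl skmulA -skswap // -skmulA -e ey r0 skmulDl skmulCl.
  by rewrite addrAC subrr add0r.
have w0 : w = (w`_0)%:P.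
  case: (eqVneq w 0) => [->|wn0]; first by rewrite coef0.
  apply: size1_polyC; have := skmul_sizeD wn0 (XsubC_neq0 c).
  rewrite -e2 size_XsubC => h.
  have := size_scale_leq rho ('X - d%:P); rewrite size_XsubC; lia.
set ka := w`_0 in w0.
rewrite w0 skmulCl in e2.
have c1 := congr1 (fun p => p`_1) e2; have c0 := congr1 (fun p => p`_0) e2.
move: c1 c0; rewrite /= !coefZ !coefB !coefX !coefC /= !subr0 !mulr1 !sub0r !mulrN => c1; rewrite -c1.
move/eqP; rewrite eqr_opp -subr_eq0 -mulrBr => /eqP h0.
have rho0 : rho = 0.
  apply/eqP; apply: contraT => rn0.
  have dc : d - c != 0 by rewrite subr_eq0 eq_sym.
  by have := mul_neq0 rn0 dc; rewrite h0 eqxx.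
exists al; split; first by rewrite ey r0 rho0 addr0.
apply/eqP; rewrite -subr_eq0; apply/eqP; rewrite -/w.
by rewrite w0 -c1 rho0.
Qed.

Definition Slist (S : F -> Prop) (cs : seq F) := forall c, c \in cs -> S c.

Lemma Slist_cons S c cs : Slist S (c :: cs) <-> S c /\ Slist S cs.
Proof.
split=> [h|[h1 h2] x]; first by split; [apply: h; rewrite inE eqxx | move=> x hx; apply: h; rewrite inE hx orbT].
by rewrite inE => /orP [/eqP ->|]; [|apply: h2].
Qed.

Section Classes.
Variables (S T : F -> Prop).
Hypothesis Scl : forall c b, b != 0 -> S c -> S (cj c b).
Hypothesis Tcl : forall c b, b != 0 -> T c -> T (cj c b).
Hypothesis disj : forall t : F, S t -> T t -> False.

Lemma Qp {cs} : Slist S cs -> forall d y u, T d -> y ** ('X - d%:P) = u ** lin cs ->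
  exists cs' al, [/\ Slist S cs', size cs' = size cs & y = al ** lin cs'].
Proof.
elim: cs => [|c cs ih] hS d y u Td e.
  by exists [::], y; split => //=; rewrite skmul1r.
have [Sc hS'] := (Slist_cons S c cs).1 hS.
have cd : c != d.
  by case: (eqVneq c d) => // cd0; rewrite cd0 in Sc; case: (disj _ Sc Td).
have cd0 : c - d != 0 by rewrite subr_eq0.
rewrite /= -skmulA in e.
have [al [ey eu]] := swap_div cd e.
have [cs'' [al' [h1 h2 h3]]] := ih hS' _ _ _ (Tcl _ _ cd0 Td) (esym eu).
exists (cj c (c - d) :: cs''), al'; split => /=.
- by apply/Slist_cons; split => //; apply: Scl.
- by rewrite h2.
- by rewrite ey h3 skmulA.
Qed.

Lemma Qmain {ds} : Slist T ds -> forall cs Z u v, Slist S cs -> Z != 0 ->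
  Z = u ** lin cs -> Z = v ** lin ds -> (size cs + size ds < size Z)%N.
Proof.
elim: ds => [|d ds ih] hT cs Z u v hS Zn0 eu ev.
  have un0 : u != 0 by apply: contraNneq Zn0 => u0; rewrite eu u0 skmul0l.
  have := skmul_sizeD un0 (lin_neq0 cs); rewrite -eu.
  have [_ ->] := lin_monic cs; have : (0 < size u)%N by rewrite size_poly_gt0.
  simpl; lia.
have [Td hT'] := (Slist_cons T d ds).1 hT.
set y := v ** lin ds.
have e : y ** ('X - d%:P) = u ** lin cs by rewrite /y skmulA -eu ev.
have [cs' [al [h1 h2 h3]]] := Qp hS _ _ _ Td e.
have yn0 : y != 0.
  by apply: contraNneq Zn0 => y0; rewrite ev /= -skmulA -/y y0 skmul0l.
have := ih hT' cs' y al v h1 yn0 h3 erefl.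
have := skmul_sizeD yn0 (XsubC_neq0 d); rewrite e -eu size_XsubC h2 /=.
lia.
Qed.

Lemma core f g csA csB u v H : Slist S csA -> Slist T csB -> f != 0 -> g != 0 ->
  rdivides sigma delta f (lin csA) -> rdivides sigma delta g (lin csB) ->
  H != 0 -> H = u ** f -> H = v ** g -> ((size f + size g).-1 <= size H)%N.
Proof.
move=> hA hB fn0 gn0 [al eal] [be ebe] Hn0 eu ev.
have aln0 : al != 0 by apply: contraNneq (lin_neq0 csA) => a0; rewrite eal a0 skmul0l.
have ben0 : be != 0 by apply: contraNneq (lin_neq0 csB) => b0; rewrite ebe b0 skmul0l.
have un0 : u != 0 by apply: contraNneq Hn0 => u0; rewrite eu u0 skmul0l.
have [m1 [m2 [m1n0 em hm]]] := skCM aln0 un0.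
set M1 := m1 ** lin csA.
have eM1 : M1 = (m2 ** v) ** g by rewrite /M1 eal -skmulA em skmulA -eu ev skmulA.
have M1n0 : M1 != 0 by apply: skmul_neq0 => //; apply: lin_neq0.
have mun0 : m2 ** v != 0 by apply: contraNneq M1n0 => m0; rewrite eM1 m0 skmul0l.
have [n1 [n2 [n1n0 en hn]]] := skCM ben0 mun0.
set Z := n1 ** lin csB.
have eZ : Z = (n2 ** m1) ** lin csA by rewrite /Z ebe -skmulA en skmulA -eM1 /M1 skmulA.
have Zn0 : Z != 0 by apply: skmul_neq0 => //; apply: lin_neq0.
have hQ := Qmain hB _ _ _ _ hA Zn0 eZ erefl.
have s1 := skmul_sizeD n1n0 (lin_neq0 csB).
have s2 := skmul_sizeD mun0 gn0.
have s3 := skmul_sizeD m1n0 (lin_neq0 csA).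
have s4 := skmul_sizeD un0 fn0.
rewrite -/Z in s1; rewrite -eM1 -/M1 in s2; rewrite -/M1 in s3; rewrite -eu in s4.
have [_ l1] := lin_monic csA; have [_ l2] := lin_monic csB.
rewrite l2 in s1; rewrite l1 in s3.
have : (0 < size f)%N by rewrite size_poly_gt0.
have : (0 < size g)%N by rewrite size_poly_gt0.
lia.
Qed.

End Classes.

Section SplitS.
Variables (S : F -> Prop).
Hypothesis Scl : forall c b, b != 0 -> S c -> S (cj c b).

Lemma LM {cs} : Slist S cs -> forall d, S d ->
  exists (us ws : seq F), [/\ Slist S us, Slist S ws & lin us ** lin cs = lin ws ** ('X - d%:P)].
Proof.
elim: cs => [|c cs ih] hS d Sd.
  exists [:: d], [::]; split => //=; first by apply/Slist_cons.
  by rewrite skmul1r !skmul1l.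
have [Sc hS'] := (Slist_cons S c cs).1 hS.
case: (eqVneq c d) => [<-|cd].
  by exists [::], cs; split => //=; rewrite skmul1l.
have dc : d != c by rewrite eq_sym.
have dc0 : d - c != 0 by rewrite subr_eq0.
have [u [w1 [h1 h2 h3]]] := ih hS' _ (Scl _ _ dc0 Sd).
exists u, (cj c (d - c) :: w1); split => //=.
  by apply/Slist_cons; split => //; apply: Scl.
by rewrite -skmulA h3 skmulA (skswap dc) -skmulA.
Qed.

Lemma LM2 {ds} : Slist S ds -> forall cs, Slist S cs ->
  exists (us ws : seq F), [/\ Slist S us, Slist S ws & lin us ** lin cs = lin ws ** lin ds].
Proof.
elim: ds => [|d ds ih] hd cs hc.
  by exists [::], cs; split => //=; rewrite skmul1l skmul1r.
have [Sd hd'] := (Slist_cons S d ds).1 hd.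
have [u1 [w1 [a1 a2 a3]]] := LM hc _ Sd.
have [u2 [w2 [b1 b2 b3]]] := ih hd' _ a2.
exists (u1 ++ u2), w2; split => //.
  by move=> x; rewrite mem_cat => /orP [] ?; [apply: a1 | apply: b1].
by rewrite lin_cat skmulA a3 -skmulA b3 skmulA.
Qed.

Lemma EX (Ls : seq (seq F)) : (forall cs, cs \in Ls -> Slist S cs) ->
  exists E, Slist S E /\ forall cs, cs \in Ls -> rdivides sigma delta (lin cs) (lin E).
Proof.
elim: Ls => [|cs Ls ih] hL.
  by exists [::]; split.
have [E [hE hdiv]] : exists E, Slist S E /\ forall cs, cs \in Ls -> rdivides sigma delta (lin cs) (lin E).
  by apply: ih => x hx; apply: hL; rewrite inE hx orbT.
have [u [w [a1 a2 a3]]] := LM2 (hL cs (mem_head _ _)) _ hE.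
exists (E ++ u); split.
  by move=> x; rewrite mem_cat => /orP [] ?; [apply: hE | apply: a1].
move=> cs'; rewrite inE => /orP [/eqP ->|hc].
  by exists (lin w); rewrite lin_cat a3.
have [h eh] := hdiv _ hc.
by exists (lin u ** h); rewrite lin_cat eh skmulA.
Qed.

End SplitS.

Lemma cj1 c : cj c 1 = c.
Proof. by rewrite /cj rmorph1 delta1 invr1 !mulr1 mul1r addr0. Qed.

Lemma cj_comp c b e : b != 0 -> e != 0 -> cj (cj c b) e = cj c (e * b).
Proof.
rewrite -!unitE => bu eu; rewrite /cj rmorphM deltaM invrM //.
rewrite !mulrDr !mulrDl !mulrA -addrA; congr (_ + (_ + _)).
by rewrite mulrK.
Qed.

Lemma skexp_lin c k : skexp sigma delta ('X - c%:P) k = lin (nseq k c).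
Proof. by elim: k => //= k ->. Qed.

Lemma inI_div {Om : seq {poly F}} {f h} : f \is monic -> inI sigma delta Om f ->
  (forall h', inI sigma delta Om h' -> h' != 0 -> (size f <= size h')%N) ->
  inI sigma delta Om h -> exists q, h = q ** f.
Proof.
move=> fm fI fmin hI.
have fn0 : f != 0 by rewrite -lead_coef_eq0 (monicP fm) oner_neq0.
have [q [r [e hr]]] := skdiv _ h fn0.
exists q; case: (eqVneq r 0) => [r0|rn0]; first by rewrite e r0 addr0.
have rI : inI sigma delta Om r.
  move=> P hP; have [h1 eh1] := hI P hP; have [f1 ef1] := fI P hP.
  exists (h1 - q ** f1); rewrite skmulBl skmulA -ef1 -eh1 e.
  by rewrite addrAC subrr add0r.
by have := fmin r rI rn0; rewrite leqNgt hr.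
Qed.

Lemma main_sec (n m : nat) (a : 'I_n -> F) (r : 'I_n -> nat) (b : 'I_m -> F) (s : 'I_m -> nat) :
  (forall i, 0 < r i)%N -> (forall j, 0 < s j)%N ->
  let Om := [seq skexp sigma delta ('X - (a i)%:P) (r i) | i <- enum 'I_n] in
  let Psi := [seq skexp sigma delta ('X - (b j)%:P) (s j) | j <- enum 'I_m] in
  uniq Om -> P_independent sigma delta Om ->
  uniq Psi -> P_independent sigma delta Psi ->
  (forall i j, ~ sd_conjugate sigma delta (a i) (b j)) ->
  size (undup (Om ++ Psi)) = (n + m)%N /\ P_independent sigma delta (Om ++ Psi).
Proof.
move=> rpos spos Om Psi uOm [_ [f [[fm fI fmin] fdeg]]] uPsi [_ [g [[gm gI gmin] gdeg]]] nc.
pose S := fun t => exists i, sd_conjugate sigma delta (a i) t.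
pose T := fun t => exists j, sd_conjugate sigma delta (b j) t.
have clos (k : nat) (e : 'I_k -> F) : forall c b0, b0 != 0 ->
    (exists i, sd_conjugate sigma delta (e i) c) ->
    exists i, sd_conjugate sigma delta (e i) (cj c b0).
  move=> c b0 b0n0 [i [be [ben0 ->]]]; exists i, (b0 * be); split.
    exact: mul_neq0.
  by rewrite -[RHS]/(cj (e i) (b0 * be)) -cj_comp.
have Scl : forall c b0, b0 != 0 -> S c -> S (cj c b0) by apply: clos.
have Tcl : forall c b0, b0 != 0 -> T c -> T (cj c b0) by apply: clos.
have disj : forall t : F, S t -> T t -> False.
  move=> t [i [be [ben0 e1]]] [j [ga [gan0 e2]]]; apply: (nc i j).
  have gi0 : ga^-1 != 0 by rewrite invr_eq0.
  exists (ga^-1 * be); split; first exact: mul_neq0.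
  change (t = cj (a i) be) in e1; change (t = cj (b j) ga) in e2.
  change (b j = cj (a i) (ga^-1 * be)); rewrite -cj_comp // -e1 e2.
  by rewrite cj_comp // mulVr ?cj1 // unitE.
pose La := [seq nseq (r i) (a i) | i <- enum 'I_n].
pose Lb := [seq nseq (s j) (b j) | j <- enum 'I_m].
have eOm : Om = [seq lin cs | cs <- La].
  by rewrite /Om /La -map_comp; apply: eq_map => i /=; apply: skexp_lin.
have ePsi : Psi = [seq lin cs | cs <- Lb].
  by rewrite /Psi /Lb -map_comp; apply: eq_map => i /=; apply: skexp_lin.
have hLa : forall cs, cs \in La -> Slist S cs.
  move=> cs /mapP [i _ ->] c; rewrite mem_nseq => /andP [_ /eqP ->].
  by exists i, 1; split; rewrite ?oner_neq0 // -/(cj (a i) 1) cj1.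
have hLb : forall cs, cs \in Lb -> Slist T cs.
  move=> cs /mapP [i _ ->] c; rewrite mem_nseq => /andP [_ /eqP ->].
  by exists i, 1; split; rewrite ?oner_neq0 // -/(cj (b i) 1) cj1.
have [EA [hEA dA]] := @EX S Scl _ hLa.
have [EB [hEB dB]] := @EX T Tcl _ hLb.
have fn0 : f != 0 by rewrite -lead_coef_eq0 (monicP fm) oner_neq0.
have gn0 : g != 0 by rewrite -lead_coef_eq0 (monicP gm) oner_neq0.
have dfA : rdivides sigma delta f (lin EA).
  apply: (inI_div fm fI fmin) => P; rewrite eOm => /mapP [cs hcs ->]; exact: dA.
have dgB : rdivides sigma delta g (lin EB).
  apply: (inI_div gm gI gmin) => P; rewrite ePsi => /mapP [cs hcs ->]; exact: dB.
have cor : forall h, inI sigma delta (Om ++ Psi) h -> h != 0 ->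
    ((size f + size g).-1 <= size h)%N.
  move=> h hI hn0.
  have [u eu] : exists u, h = u ** f.
    by apply: (inI_div fm fI fmin) => P hP; apply: hI; rewrite mem_cat hP.
  have [v ev] : exists v, h = v ** g.
    by apply: (inI_div gm gI gmin) => P hP; apply: hI; rewrite mem_cat hP orbT.
  exact: (@core S T Scl Tcl disj f g EA EB u v h hEA hEB fn0 gn0 dfA dgB hn0 eu ev).
have dsj : forall P, P \in Om -> P \in Psi -> False.
  move=> P; rewrite eOm ePsi => /mapP [cs hcs ->] /mapP [ds hds eP].
  have e2 : lin cs = 1 ** lin ds by rewrite skmul1l.
  have := @Qmain S T Scl Tcl disj ds (hLb ds hds) cs (lin cs) 1 1 (hLa cs hcs) (lin_neq0 cs)
    (esym (skmul1l _)) e2.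
  have [_ ->] := lin_monic cs.
  move: hds => /mapP [j _ ->]; rewrite size_nseq; have := spos j; lia.
have uc : uniq (Om ++ Psi).
  rewrite cat_uniq uOm uPsi andbT /=; apply/hasPn => P hP; apply/negP => hO.
  exact: dsj hO hP.
have sOm : size Om = n by rewrite /Om size_map size_enum_ord.
have sPsi : size Psi = m by rewrite /Psi size_map size_enum_ord.
split; first by rewrite undup_id // size_cat sOm sPsi.
have [m1 [m2 [m1n0 em hm]]] := skCM fn0 gn0.
set H0 := m1 ** f.
have H0n0 : H0 != 0 by apply: skmul_neq0.
have H0I : inI sigma delta (Om ++ Psi) H0.
  move=> P; rewrite mem_cat => /orP [hP|hP].
    by have [f' ef'] := fI P hP; exists (m1 ** f'); rewrite /H0 ef' skmulA.
  by have [g' eg'] := gI P hP; exists (m2 ** g'); rewrite /H0 em eg' skmulA.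
set c := (lead_coef H0)^-1.
have lu : lead_coef H0 \is a GRing.unit by rewrite unitE lead_coef_eq0.
have cn0 : c != 0 by rewrite invr_eq0 lead_coef_eq0.
set Fm := c *: H0.
have [sF lF] := scale_size c H0 cn0.

have Fmn0 : Fm != 0 by rewrite -size_poly_gt0 sF size_poly_gt0.
have FmI : inI sigma delta (Om ++ Psi) Fm.
  by move=> P hP; have [h' eh'] := H0I P hP; exists (c *: h'); rewrite /Fm eh' skmulZl.
have hFm := cor Fm FmI Fmn0.
have sH0 := skmul_size m1n0 fn0.
split; first by exists Fm.
exists Fm; split.
  split => //; first by apply/monicP; rewrite lF mulVr.
  move=> h hI hn0; apply: leq_trans (cor h hI hn0).
  rewrite sF -/H0 sH0; apply: arith1 => //; by rewrite size_poly_gt0.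
rewrite undup_id // big_cat /= -(undup_id uOm) -(undup_id uPsi) -fdeg -gdeg.
move: hFm; rewrite sF -/H0 sH0 => hFm.
by apply: arith2 => //; rewrite ?size_poly_gt0.
Qed.

End SkewTheory.

Theorem mainTheorem7 (F : unitRingType) (sigma : {rmorphism F -> F}) (delta : F -> F)
  (n m : nat) (a : 'I_n -> F) (r : 'I_n -> nat) (b : 'I_m -> F) (s : 'I_m -> nat) :
  division_ring F ->
  sigma_derivation sigma delta ->
  (0 < n)%N -> (0 < m)%N ->
  (forall i, 0 < r i)%N -> (forall j, 0 < s j)%N ->
  let Om := [seq skexp sigma delta ('X - (a i)%:P) (r i) | i <- enum 'I_n] in
  let Psi := [seq skexp sigma delta ('X - (b j)%:P) (s j) | j <- enum 'I_m] in
  uniq Om -> P_independent sigma delta Om ->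
  uniq Psi -> P_independent sigma delta Psi ->
  (forall i j, ~ sd_conjugate sigma delta (a i) (b j)) ->
  size (undup (Om ++ Psi)) = (n + m)%N /\ P_independent sigma delta (Om ++ Psi).
Proof.
move=> divF sdF _ _; exact: main_sec.
Qed.
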